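(* Let $G$ be an $(N,k)$ Adinkra obtained from an $N$-cube Adinkra by quotienting by a doubly even $(N,k)$ code $C$ (vertices labeled by cosets $x+C$). Let $\phi$ be a single orbit of the automorphism group of $G$ disregarding vertex coloring, and let $c\in\mathbb{Z}_2^N$. If $\langle x,c\rangle \pmod 2$ takes the same value for all $x\in\mathbb{Z}_2^N$ with $x+C\in\phi$, then $c\in C$.
   Context: An Adinkra of dimension $N$ is a finite connected simple graph $G=(V,E)$ with: a bipartition of $V$ into bosons and fermions (every edge joins a boson and a fermion); a height function $\mathrm{hgt}:V\to\mathbb{Z}$ with adjacent vertices at heights differing by $1$; a coloring of $E$ by colors $\{1,\dots,N\}$ such that each vertex is incident to exactly one edge of each color; an edge parity $\pi:E\to\mathbb{Z}_2$ (parity $1$ = dashed); such that every path with edge colors $(i,j)$, $i\ne j$, lies in a unique 4-cycle with colors $(i,j,i,j)$, each having an odd number of dashed edges. If $|V|=2^{N-k}$, $G$ is an $(N,k)$ Adinkra. Switching a vertex reverses the parity of its incident edges. A doubly even $(N,k)$ code $C$ is a $k$-dimensional subspace of $\mathbb{Z}_2^N$ all of whose elements have weight $\equiv0\pmod4$; $\langle u,v\rangle=\sum_i u_iv_i \bmod 2$. Quotient construction: label the vertices of an $N$-cube Adinkra by $\mathbb{Z}_2^N$ so that color-$i$ edges join $v$ and $v+e_i$, and identify vertices whose labels differ by elements of $C$; the result has vertices $x+C$ with color-$i$ edges joining $x+C$ and $x+e_i+C$. An automorphism disregarding vertex coloring is a permutation of $V$ preserving adjacency and edge colors (ignoring heights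 and bipartition) which becomes parity-preserving after switching some set of vertices. *)

(* Defs.v *)
From HB Require Import structures.
From mathcomp Require Import all_boot all_order all_algebra.
Set Implicit Arguments. Unset Strict Implicit. Unset Printing Implicit Defensive.
Import GRing.Theory.
Local Open Scope ring_scope.

Notation word N := 'rV['F_2]_N.

Definition ev (N : nat) (i : 'I_N) : word N := delta_mx 0 i.

Definition wt (N : nat) (v : word N) : nat := #|[set i | v 0 i != 0]|.

Definition doubly_even (N : nat) (C : {vspace word N}) : Prop :=
  forall v, v \in C -> (wt v %% 4 = 0)%N.

Definition dot (N : nat) (u v : word N) : 'F_2 := \sum_(i < N) u 0 i * v 0 i.

(* Vertices of the quotient Adinkra are cosets x + C; a function on vertices
   is represented by a C-invariant function on words. *)
Definition C_invariant (N : nat) (A : Type) (C : {vspace word N}) (g : word N -> A) : Prop :=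
  forall x y, x - y \in C -> g x = g y.

(* Edge parity on the quotient: pi x i is the parity of the colour-i edge
   joining x + C and x + e_i + C.  [quotient_dashing C pi] says pi is a
   well-defined edge parity (independent of coset representative and of the
   endpoint used) satisfying the Adinkra condition: every (i,j,i,j) 4-cycle,
   i <> j, has an odd number of dashed edges. *)
Definition quotient_dashing (N : nat) (C : {vspace word N}) (pi : word N -> 'I_N -> 'F_2) : Prop :=
  [/\ forall i, C_invariant C (fun x => pi x i),
      forall x i, pi (x + ev i) i = pi x i
    & forall x i j, i != j -> pi x i + pi (x + ev i) j + pi (x + ev j) i + pi x j = 1].

(* Automorphism of the quotient Adinkra disregarding vertex colouring,
   represented by a map f on words inducing a well-defined permutation of the
   cosets, preserving colour-i adjacency (x+C -- x+e_i+C is sent to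
   f x + C -- f x + e_i + C), and which becomes parity preserving after
   switching the vertex set {x + C | s x = 1}. *)
Definition is_aut_nc (N : nat) (C : {vspace word N}) (pi : word N -> 'I_N -> 'F_2)
    (f : word N -> word N) : Prop :=
  [/\ forall x y, (x - y \in C) <-> (f x - f y \in C),
      forall y, exists x, f x - y \in C,
      forall x i, f (x + ev i) - (f x + ev i) \in C
    & exists s : word N -> 'F_2, C_invariant C s /\
        forall x i, pi (f x) i = pi x i + s x + s (x + ev i)].

Definition nc_orbit_mem (N : nat) (C : {vspace word N}) (pi : word N -> 'I_N -> 'F_2)
    (x0 x : word N) : Prop :=
  exists f, is_aut_nc C pi f /\ x - f x0 \in C.

(* Main.v *)
Require Import Defs.
From HB Require Import structures.
From mathcomp Require Import all_boot all_order all_algebra.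
Set Implicit Arguments. Unset Strict Implicit. Unset Printing Implicit Defensive.
Import GRing.Theory VectorInternalTheory.
Local Open Scope ring_scope.

Lemma F2_cases (z : 'F_2) : z = 0 \/ z = 1.
Proof. case: z => [[|[|m]] Hm]; [left|right|]; try by apply/val_inj. by []. Qed.

Lemma F2_addxx (z : 'F_2) : z + z = 0.
Proof. case: (F2_cases z) => ->; [by rewrite addr0 | by apply/val_inj]. Qed.

Lemma F2_opp (z : 'F_2) : - z = z.
Proof. by apply/eqP; rewrite eq_sym -subr_eq0 opprK F2_addxx. Qed.

Lemma memvK' N (v : word N) (U : {vspace word N}) : (v \in U) = (VectorInternalTheory.v2r v <= VectorInternalTheory.vs2mx U)%MS.
Proof. by rewrite -genmxE. Qed.

Lemma perp_perp N (C : {vspace word N}) (c : word N) :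
  (forall a, (forall w, w \in C -> dot a w = 0) -> dot a c = 0) -> c \in C.
Proof.
move=> H; apply/negPn/negP => Hc.
pose K := cokermx (VectorInternalTheory.vs2mx C).
pose psi (v : word N) := VectorInternalTheory.v2r v *m K.
have Hmem v : (v \in C) = (psi v == 0) by rewrite memvK' submxE.
have [j Hj] : exists j, psi c 0 j != 0.
  case: (boolP [exists j, psi c 0 j != 0]) => [/existsP //|].
  rewrite negb_exists => /forallP Hall; case/negP: Hc; rewrite Hmem.
  apply/eqP/rowP => j; rewrite [RHS]mxE; have := Hall j; rewrite negbK; exact/eqP.
pose a : word N := \row_i psi (ev i) 0 j.
have Hdot v : dot a v = psi v 0 j.
  rewrite {2}(row_sum_delta v) /psi. rewrite linear_sum mulmx_suml summxE /dot.
  apply: eq_bigr => i _; rewrite linearZ -scalemxAl [RHS]mxE mulrC /a.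
  by rewrite [X in _ * X]mxE.
move: (H a) Hj; rewrite Hdot => ->; first by rewrite eqxx.
by move=> w Hw; rewrite Hdot; move: Hw; rewrite Hmem => /eqP ->; rewrite mxE.
Qed.

From mathcomp Require Import ring.

Lemma F2_eq (a b : 'F_2) : a + b = 0 -> a = b.
Proof. by move/eqP; rewrite addr_eq0 F2_opp => /eqP. Qed.

Lemma F2_move (a b c : 'F_2) : a + b = c -> a = b + c.
Proof. by move<-; rewrite addrCA F2_addxx addr0. Qed.

Definition pref N (i : nat) (x : word N) : word N :=
  \row_j (if (j < i)%N then x 0 j else 0).

Lemma ev_entry N (j k : 'I_N) : ev j 0 k = (j == k)%:R.
Proof. by rewrite /ev mxE eqxx eq_sym. Qed.

Lemma pref0 N (x : word N) : pref 0 x = 0.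
Proof. by apply/rowP => j; rewrite !mxE. Qed.

Lemma prefN N (x : word N) : pref N x = x.
Proof. by apply/rowP => j; rewrite !mxE ltn_ord. Qed.

Lemma prefD N i (x y : word N) : pref i (x + y) = pref i x + pref i y.
Proof. by apply/rowP => j; rewrite !mxE; case: ifP; rewrite ?addr0. Qed.

Lemma prefS N (i : 'I_N) (x : word N) : pref i.+1 x = pref i x + x 0 i *: ev i.
Proof.
apply/rowP => j; rewrite !mxE eqxx /= ltnS leq_eqVlt.
case: (eqVneq j i) => [->|Hne] /=.
- by rewrite eqxx ltnn add0r mulr1.
- have Hne' : (j : nat) != i by [].
  by rewrite (negbTE Hne') mulr0 addr0.
Qed.

Lemma pref_ev N i (j : 'I_N) : pref i (ev j) = if (j < i)%N then ev j else 0.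
Proof.
apply/rowP => k; rewrite [LHS]mxE ev_entry eq_sym; case: (eqVneq k j) => [->|Hne].
  by case: ifP => _; rewrite ?ev_entry ?eqxx ?mxE.
case: ifP => _; case: ifP => _; rewrite ?ev_entry ?mxE //; by rewrite eq_sym (negbTE Hne).
Qed.

Lemma F2_tele (u : nat -> 'F_2) n : \sum_(i < n) (u i.+1 + u i) = u n + u 0%N.
Proof.
elim: n => [|n IH]; first by rewrite big_ord0 F2_addxx.
rewrite big_ord_recr /= IH.
transitivity (u n.+1 + u 0%N + (u n + u n)); first ring.
by rewrite F2_addxx addr0.
Qed.

Lemma trans_lin N (F : word N -> 'F_2) (g : 'I_N -> 'F_2) :
  (forall y j, F (y + ev j) = F y + g j) ->
  forall y x, F (y + x) = F y + \sum_i x 0 i * g i.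
Proof.
move=> HF y x; apply: F2_move.
have E := F2_tele (fun k => F (y + pref k x)) N.
rewrite /= prefN pref0 addr0 in E; rewrite -E.
apply: eq_bigr => i _; rewrite prefS addrA.
by case: (F2_cases (x 0 i)) => ->; rewrite ?scale0r ?addr0 ?mul0r ?F2_addxx // scale1r HF mul1r addrAC F2_addxx add0r.
Qed.

Definition Sint N (D : word N -> 'I_N -> 'F_2) (x : word N) :=
  \sum_i x 0 i * D (pref i x) i.

Lemma pref_step_eq N (D : word N -> 'F_2) (j : 'I_N) (x : word N) :
  (forall y, D (y + ev j) = D y) -> D (pref j.+1 x) = D (pref j x).
Proof.
move=> H; rewrite prefS; case: (F2_cases (x 0 j)) => ->.
  by rewrite scale0r addr0.
by rewrite scale1r H.
Qed.

Lemma integrate N (D : word N -> 'I_N -> 'F_2) :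
  (forall y i, D (y + ev i) i = D y i) ->
  (forall y (i j : 'I_N), i != j -> D y i + D (y + ev i) j + D (y + ev j) i + D y j = 0) ->
  forall x j, Sint D (x + ev j) = Sint D x + D x j.
Proof.
move=> Hedge Hcl x j; apply: F2_move.
rewrite /Sint -big_split /=.
pose V k := D (pref (maxn k j.+1) x) j.
have HT : forall i : 'I_N, (x + ev j) 0 i * D (pref i (x + ev j)) i + x 0 i * D (pref i x) i
    = V i.+1 + V i + (if i == j then D (pref j x) j else 0).
  move=> i; rewrite mxE ev_entry prefD pref_ev /V.
  case: (ltngtP i j) => Hij.
  - have Hji : (j == i) = false by apply: gtn_eqF.
    have Hij' : (i == j) = false by apply: ltn_eqF.
    rewrite Hji Hij' /= mulr0n !addr0 F2_addxx.
    rewrite (maxn_idPr (ltnW Hij : (i.+1 <= j.+1)%N)) (maxn_idPr (leqW (ltnW Hij))) F2_addxx.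
    reflexivity.
  - have Hji : (j == i) = false by apply: ltn_eqF.
    have Hij' : (i == j) = false by apply: gtn_eqF.
    rewrite Hji Hij' /= mulr0n !addr0.
    rewrite (maxn_idPl (ltnW Hij : (j.+1 <= i.+1)%N)) (maxn_idPl Hij) prefS.
    have Hne : i != j by rewrite Hij'.
    case: (F2_cases (x 0 i)) => ->.
      by rewrite !mul0r scale0r !addr0 F2_addxx.
    rewrite !mul1r scale1r; apply: F2_eq.
    rewrite -[RHS](Hcl (pref i x) i j Hne); ring.
  - have -> : i = j by apply/val_inj.
    rewrite !eqxx /= addr0 maxnn (maxn_idPr (leqnSn j)) F2_addxx add0r.
    transitivity ((x 0 j + x 0 j) * D (pref j x) j + D (pref j x) j); first ring.
    by rewrite F2_addxx mul0r add0r.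
rewrite (eq_bigr _ (fun i _ => HT i)) big_split /= F2_tele -big_mkcond /= big_pred1_eq.
rewrite /V (maxn_idPl (ltn_ord j)) max0n prefN.
rewrite (@pref_step_eq _ (fun y => D y j) j x (fun y => Hedge y j)).
by rewrite -addrA F2_addxx addr0.
Qed.

Lemma sum_wt N (w : word N) : \sum_i w 0 i = (wt w)%:R.
Proof.
rewrite /wt -sum1_card natr_sum [RHS]big_mkcond /=; apply: eq_bigr => i _.
by rewrite inE; case: (F2_cases (w 0 i)) => ->.
Qed.

Lemma even_wt N (w : word N) : (wt w %% 4 = 0)%N -> (wt w)%:R = 0 :> 'F_2.
Proof.
move=> H; rewrite (divn_eq (wt w) 4) H addn0 natrM.
have -> : (4%:R : 'F_2) = 0 by apply/val_inj.
by rewrite mulr0.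
Qed.

Definition Lsum N (pi : word N -> 'I_N -> 'F_2) (w y : word N) :=
  \sum_i w 0 i * pi (pref i w + y) i.

Lemma loop_step N (C : {vspace word N}) pi w :
  quotient_dashing C pi -> w \in C -> (wt w %% 4 = 0)%N ->
  forall y j, Lsum pi w (y + ev j) = Lsum pi w y + w 0 j.
Proof.
case=> Hinv Hedge Hcl Hw Hwt y j; apply: F2_move.
have Hedge' : forall (x : word N) i, pi (x + ev i) i = pi x i by move=> x i; apply: Hedge.
have Hcl' : forall (x : word N) i j, i != j ->
  pi x i + pi (x + ev i) j + pi (x + ev j) i + pi x j = 1 by move=> x i0 j0; apply: Hcl.
rewrite /Lsum -big_split /=.
pose Q k := pi (pref k w + y) j.
have HT : forall i : 'I_N, w 0 i * pi (pref i w + (y + ev j)) i + w 0 i * pi (pref i w + y) i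
   = (Q i.+1 + Q i) + (w 0 i + (if i == j then w 0 j else 0)).
  move=> i; rewrite /Q prefS; case: (eqVneq i j) => [->|Hne].
  - case: (F2_cases (w 0 j)) => ->.
      by rewrite !mul0r scale0r !addr0 F2_addxx.
    rewrite !mul1r scale1r [pref j w + (y + ev j)]addrA. rewrite (Hedge' (pref j w + y) j) F2_addxx [pref j w + ev j + y]addrAC (Hedge' (pref j w + y) j) F2_addxx.
    by rewrite F2_addxx addr0.
  - rewrite addr0; case: (F2_cases (w 0 i)) => ->.
      by rewrite !mul0r scale0r !addr0 F2_addxx.
    rewrite !mul1r scale1r [pref i w + (y + ev j)]addrA [pref i w + ev i + y]addrAC.
    apply: F2_move; rewrite -[RHS](Hcl' (pref i w + y) i j Hne); ring.
rewrite (eq_bigr _ (fun i _ => HT i)) big_split /= F2_tele big_split /= -big_mkcond /=.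
rewrite big_pred1_eq sum_wt even_wt // add0r /Q pref0 prefN add0r.
rewrite (Hinv j (w + y) y) ?addrK // F2_addxx add0r; reflexivity.
Qed.

Lemma dotDl N (x y c : word N) : dot (x + y) c = dot x c + dot y c.
Proof. by rewrite /dot -big_split; apply: eq_bigr => i _; rewrite mxE mulrDl. Qed.

Lemma dot0l N (c : word N) : dot 0 c = 0.
Proof. by rewrite /dot big1 // => i _; rewrite mxE mul0r. Qed.

Lemma trans_aut N (C : {vspace word N}) pi (a : word N) :
  doubly_even C -> quotient_dashing C pi ->
  (forall w, w \in C -> dot a w = 0) -> is_aut_nc C pi (fun x => x + a).
Proof.
move=> Hde Hqd Ha; have Hqd' := Hqd; case: Hqd => Hinv Hedge Hcl.
have Hedge' : forall (x : word N) i, pi (x + ev i) i = pi x i by move=> x i; apply: Hedge.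
have Hcl' : forall (x : word N) i j, i != j ->
  pi x i + pi (x + ev i) j + pi (x + ev j) i + pi x j = 1 by move=> x i0 j0; apply: Hcl.
have Hinv' : forall (i : 'I_N) (x y : word N), x - y \in C -> pi x i = pi y i.
  by move=> i x y; apply: Hinv.
pose D (y : word N) (i : 'I_N) := pi (y + a) i + pi y i.
have DE : forall y i, D (y + ev i) i = D y i.
  by move=> y i; rewrite /D [y + ev i + a]addrAC (Hedge' (y + a) i) (Hedge' y i).
have DC : forall y (i j : 'I_N), i != j -> D y i + D (y + ev i) j + D (y + ev j) i + D y j = 0.
  move=> y i j Hne; rewrite /D [y + ev i + a]addrAC [y + ev j + a]addrAC.
  transitivity ((pi (y+a) i + pi (y+a+ev i) j + pi (y+a+ev j) i + pi (y+a) j)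
     + (pi y i + pi (y + ev i) j + pi (y + ev j) i + pi y j)); first ring.
  by rewrite (Hcl' (y+a) i j Hne) (Hcl' y i j Hne) F2_addxx.
pose S := Sint D.
have HS : forall x j, S (x + ev j) = S x + D x j := integrate DE DC.
have S0 : S 0 = 0 by rewrite /S /Sint big1 // => i _; rewrite mxE mul0r.
have SC : C_invariant C S.
  move=> x y Hxy; set w := x - y in Hxy.
  have -> : x = y + w by rewrite /w addrC subrK.
  pose G z := S (z + w) + S z.
  have HG : forall z j, G (z + ev j) = G z + 0.
    move=> z j; rewrite /G [z + ev j + w]addrAC !HS.
    have E : D (z + w) j = D z j.
      rewrite /D (Hinv' j (z + w + a) (z + a)); last by rewrite [z + w + a]addrAC addrC addrK.
      by rewrite (Hinv' j (z + w) z) // addrAC subrr add0r.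
    rewrite E; transitivity (S (z + w) + S z + (D z j + D z j)); first ring.
    by rewrite F2_addxx.
  have := trans_lin HG 0 y; rewrite add0r big1 ?addr0 => [Gy|i _]; last by rewrite mulr0.
  have Sw : S w = 0.
    have HL := trans_lin (loop_step Hqd' Hxy (Hde w Hxy)) 0 a.
    have -> : S w = Lsum pi w a + Lsum pi w 0.
      by rewrite /S /Sint /D /Lsum -big_split; apply: eq_bigr => i _; rewrite addr0 mulrDr.
    rewrite -[a in Lsum pi w a]add0r HL.
    have -> : \sum_i a 0 i * w 0 i = dot a w by [].
    by rewrite Ha // addr0 F2_addxx.
  apply: F2_eq; rewrite -/(G y) Gy /G add0r Sw S0 addr0; reflexivity.
split.
- by move=> x y; rewrite opprD addrACA subrr addr0.
- by move=> y; exists (y - a); rewrite subrK subrr mem0v.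
- by move=> x i; rewrite [x + ev i + a]addrAC subrr mem0v.
- exists S; split => // x i; rewrite HS /D.
  transitivity (pi (x + a) i + (S x + S x) + (pi x i + pi x i)); first by rewrite !F2_addxx !addr0.
  ring.
Qed.

Unset Implicit Arguments.
Set Strict Implicit.

Theorem mainTheorem6 (N k : nat) (C : {vspace 'rV['F_2]_N})
    (pi : 'rV['F_2]_N -> 'I_N -> 'F_2) (x0 c : 'rV['F_2]_N) (b : 'F_2) :
  \dim C = k ->
  doubly_even C ->
  quotient_dashing C pi ->
  (forall x, nc_orbit_mem C pi x0 x -> dot x c = b) ->
  c \in C.
Proof.
move=> _ Hde Hqd Hb; apply: perp_perp => a Ha.
have orb : forall a', (forall w, w \in C -> dot a' w = 0) -> nc_orbit_mem C pi x0 (x0 + a').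
  move=> a' Ha'; exists (fun x => x + a'); split; first exact: trans_aut.
  by rewrite subrr mem0v.
have H1 := Hb _ (orb a Ha).
have H0 := Hb _ (orb 0 (fun w _ => dot0l w)).
rewrite addr0 in H0; rewrite dotDl H0 in H1.
by apply: (@addrI _ b); rewrite addr0.
Qed.
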